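(* Let $m,n\ge 0$ be integers with $p=2m+n\ge 2$, and let $\Delta\ge 0$. Let $\mathcal{G}_\Delta$ be the family of simple graphs with maximum degree at most $\Delta$. Then $$\omega_{r(m,n)}(\mathcal{G}_\Delta)\le \left\lfloor \frac{p-1}{p}\Delta^2\right\rfloor+\Delta+1.$$ Equivalently: for every $(m,n)$-colored mixed graph $G$ whose underlying graph has maximum degree at most $\Delta$, every relative $(m,n)$-clique of $G$ has at most $\lfloor \frac{p-1}{p}\Delta^2\rfloor+\Delta+1$ vertices.
   Context: An $(m,n)$-colored mixed graph $G$ is obtained from a simple graph $U(G)$ (its underlying graph) by giving each edge either an orientation and one of $m$ arc colors $\{1,\dots,m\}$ (making it an arc) or leaving it unoriented with one of $n$ edge colors $\{1,\dots,n\}$. For adjacent $u,v$, the adjacency type of $uv$ is: ''arc from $u$ to $v$ of color $i$'', ''arc from $v$ to $u$ of color $i$'', or ''edge of color $j$''. Two pairs $uv$, $wx$ have the same adjacency type if both are arcs $u\to v$, $w\to x$ of the same color, or both arcs $v\to u$, $x\to w$ of the same color, or both edges of the same color. A colored homomorphism $f:G\to H$ between $(m,n)$-colored mixed graphs (both with simple underlying graphs) is a vertex map such that for every adjacent pair $uv$ of $G$, $f(u)f(v)$ is adjacent in $H$ with the same adjacency type as $uv$. A set $R\subseteq V(G)$ is a relative $(m,n)$-clique if for every pair of distinct $u,v\in R$ and every colored homomorphism $f:G\to H$, $f(u)\ne f(v)$. $\omega_{r(m,n)}(G)$ is the maximum size of a relative $(m,n)$-clique of $G$; for a simple graph $\Gamma$,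 $\omega_{r(m,n)}(\Gamma)$ is the maximum of $\omega_{r(m,n)}(G)$ over all $(m,n)$-colored mixed graphs $G$ with $U(G)=\Gamma$; for a family $\mathcal{F}$, $\omega_{r(m,n)}(\mathcal{F})=\max_{\Gamma\in\mathcal{F}}\omega_{r(m,n)}(\Gamma)$. A 2-path $uvw$ in $U(G)$ is special if $uv$ and $vw$ do not have the same adjacency type (comparing $uv$ with $vw$, i.e. reading both in the direction $u\to v$, $v\to w$). It is known that two distinct vertices lie together in some relative clique (equivalently, cannot be identified by any colored homomorphism) iff they are adjacent or joined by a special 2-path. *)

(* Defs.v *)
From mathcomp Require Import all_boot.
Set Implicit Arguments. Unset Strict Implicit. Unset Printing Implicit Defensive.

(* Adjacency types of an (m,n)-colored mixed graph, read in the direction u -> v: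
   ArcOut i : arc from u to v of color i;  ArcIn i : arc from v to u of color i;
   Edge j : unoriented edge of color j. *)
Inductive adjtype (m n : nat) :=
| ArcOut of 'I_m
| ArcIn of 'I_m
| Edge of 'I_n.

Definition rev_adj (m n : nat) (t : adjtype m n) : adjtype m n :=
  match t with
  | ArcOut i => ArcIn n i
  | ArcIn i => ArcOut n i
  | Edge j => Edge m j
  end.

(* An (m,n)-colored mixed graph on vertex type V is given by a function
   adj : V -> V -> option (adjtype m n); None means non-adjacent. *)
Definition is_mixed_graph (m n : nat) (V : Type) (adj : V -> V -> option (adjtype m n)) : Prop :=
  (forall u, adj u u = None) /\
  (forall u v, adj v u = option_map (@rev_adj m n) (adj u v)).

Definition colored_hom (m n : nat) (V W : Type)
  (adjG : V -> V -> option (adjtype m n)) (adjH : W -> W -> option (adjtype m n))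
  (f : V -> W) : Prop :=
  forall u v t, adjG u v = Some t -> adjH (f u) (f v) = Some t.

Definition relative_clique (m n : nat) (V : finType)
  (adj : V -> V -> option (adjtype m n)) (R : {set V}) : Prop :=
  forall u v, u \in R -> v \in R -> u != v ->
  forall (W : finType) (adjH : W -> W -> option (adjtype m n)),
    is_mixed_graph adjH ->
    forall f : V -> W, colored_hom adj adjH f -> f u != f v.

Definition max_deg_le (m n : nat) (V : finType)
  (adj : V -> V -> option (adjtype m n)) (D : nat) : Prop :=
  forall u, #|[set v | isSome (adj u v)]| <= D.

(* Main.v *)
From HB Require Import structures.
Require Import Defs.
From mathcomp Require Import all_boot.
Set Implicit Arguments. Unset Strict Implicit. Unset Printing Implicit Defensive.

Section Code.
Variables m n : nat.
Definition code (t : adjtype m n) : ('I_m + 'I_m) + 'I_n :=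
  match t with ArcOut i => inl (inl i) | ArcIn i => inl (inr i) | Edge j => inr j end.
Definition decode (c : ('I_m + 'I_m) + 'I_n) : adjtype m n :=
  match c with inl (inl i) => ArcOut n i | inl (inr i) => ArcIn n i | inr j => Edge m j end.
Lemma codeK : cancel code decode. Proof. by case. Qed.
Lemma decodeK : cancel decode code. Proof. by case=> [[]|]. Qed.
HB.instance Definition _ := Finite.copy (adjtype m n) (can_type codeK).
Lemma card_adjtype : #|{: adjtype m n}| = 2 * m + n.
Proof.
rewrite (bij_eq_card (f := code)); last by exists decode; [exact: codeK|exact: decodeK].
by rewrite card_sum card_sum !card_ord mul2n addnn.
Qed.
Lemma rev_adjK : involutive (@rev_adj m n). Proof. by case. Qed.
End Code.

Section Key.
Variables (m n : nat) (V : finType) (adj : V -> V -> option (adjtype m n)).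
Hypothesis Hadj : is_mixed_graph adj.

Definition orelse (A : Type) (o1 o2 : option A) := if o1 is Some t then Some t else o2.

Lemma orelse_map A (f : A -> A) o1 o2 :
  orelse (option_map f o1) (option_map f o2) = option_map f (orelse o1 o2).
Proof. by case: o1. Qed.

Lemma key (R : {set V}) u v : relative_clique adj R -> u \in R -> v \in R -> u != v ->
  isSome (adj u v) ||
  [exists w, [&& isSome (adj w u), isSome (adj w v) & adj w u != adj w v]].
Proof.
move=> HR uR vR uv.
case: Hadj => H1 H2.
case Huv: (adj u v) => [t|] //=.
apply/negP => /existsP Hno.
have comp : forall w a b, adj w u = Some a -> adj w v = Some b -> a = b.
  move=> w a b Ha Hb; apply/eqP; apply/negPn/negP => ab; apply: Hno; exists w.
  by rewrite Ha Hb /=; apply/negP => /eqP [] /eqP; apply/negP.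
have Hvu : adj v u = None by rewrite H2 Huv.
pose adjH a b := if (a == v) || (b == v) then None
  else if a == u then orelse (adj u b) (adj v b)
  else if b == u then orelse (adj a u) (adj a v) else adj a b.
pose f x := if x == v then u else x.
have : f u != f v.
  apply: (HR u v uR vR uv _ adjH); last first.
    move=> x y s Hxy; rewrite /f /adjH.
    case: (eqVneq x v) => [xv|xv]; case: (eqVneq y v) => [yv|yv].
    - by subst; rewrite H1 in Hxy.
    - subst x; rewrite eqxx (negbTE yv) /=.
      case: (eqVneq y u) => [yu|yu]; first by subst; rewrite Hvu in Hxy.
      rewrite (negbTE uv) /=.
      case Huy: (adj u y) => [s'|] //=.
      have := comp y (rev_adj s') (rev_adj s).
      rewrite (H2 u y) (H2 v y) Huy Hxy => /(_ erefl erefl) /(congr1 (@rev_adj m n)).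
      by rewrite !rev_adjK => ->.
    - subst y; rewrite (negbTE xv) eqxx (negbTE uv) /=.
      case: (eqVneq x u) => [xu|xu]; first by subst; rewrite Huv in Hxy.
      case Hxu: (adj x u) => [s'|] //=.
      by rewrite (comp x s' s Hxu Hxy).
    - rewrite (negbTE xv) (negbTE yv) /=.
      case: (eqVneq x u) => [xu|xu]; first by subst; rewrite Hxy.
      case: (eqVneq y u) => [yu|yu]; first by subst; rewrite Hxy.
      done.
  split.
    move=> a; rewrite /adjH; case: (eqVneq a v) => //= av.
    by case: (eqVneq a u) => [->|]; rewrite ?H1 ?Hvu.
  move=> a b; rewrite /adjH.
  case: (eqVneq a v) => [av|av]; case: (eqVneq b v) => [bv|bv] //=.
  case: (eqVneq a u) => [au|au]; case: (eqVneq b u) => [bu|bu] //=.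
  - by subst; rewrite H1 Hvu.
  - by subst; rewrite (H2 u b) (H2 v b) orelse_map.
  - by subst; rewrite (H2 a u) (H2 a v) orelse_map.
by rewrite /f eqxx (negbTE uv) eqxx.
Qed.
End Key.

From mathcomp Require Import zify.

Lemma sumb_card (T : finType) (P : pred T) :
  \sum_(x : T) (P x : nat) = #|[set x | P x]|.
Proof. rewrite -sum1_card [RHS]big_mkcond /=; apply: eq_bigr => x _; rewrite inE; by case: (P x). Qed.

Lemma sum_sub_le (T : finType) (R : {set T}) (F : T -> nat) :
  \sum_(x in R) F x <= \sum_x F x.
Proof. by rewrite [X in _ <= X](bigID (mem R)) /= leq_addr. Qed.

Lemma sum_restrict (T : finType) (R : {set T}) (P : pred T) (F : T -> nat) :
  (forall x, ~~ P x -> F x = 0) ->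
  \sum_(x in R) F x = \sum_(x in [set x in R | P x]) F x.
Proof.
move=> H0; rewrite (bigID P) /= [X in _ + X]big1 ?addn0; last by move=> x /andP[_ /H0].
by apply: eq_bigl => x; rewrite inE.
Qed.

Lemma cauchy (T : finType) (C : {set T}) (a : T -> nat) :
  (\sum_(c in C) a c) ^ 2 <= #|C| * \sum_(c in C) a c ^ 2.
Proof.
have E : (\sum_(c in C) a c) ^ 2 = \sum_(c in C) \sum_(d in C) a c * a d.
  by rewrite expnS expn1 big_distrl /=; apply: eq_bigr => c _; rewrite big_distrr.
have E2 : \sum_(c in C) \sum_(d in C) (a c ^ 2 + a d ^ 2) = 2 * (#|C| * \sum_(c in C) a c ^ 2).
  under eq_bigr do rewrite big_split /= sum_nat_const.
  by rewrite big_split /= sum_nat_const -big_distrr /= mul2n addnn.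
rewrite -(leq_pmul2l (isT : 0 < 2)) -E2 E big_distrr /= leq_sum // => c _.
rewrite big_distrr /= leq_sum // => d _.
exact: (nat_Cauchy (a c) (a d)).
Qed.

Lemma core (V T : finType) (S : {set V}) (g : V -> T) (C : {set T}) :
  (forall x, x \in S -> g x \in C) ->
  (\sum_(x in S) \sum_(y in S) (g x != g y)) * #|C| <= (#|C|).-1 * #|S| ^ 2.
Proof.
move=> HC.
pose r c := \sum_(x in S | g x == c) 1.
have E1 : \sum_(x in S) \sum_(y in S) (g x != g y) + \sum_(x in S) \sum_(y in S) (g x == g y : nat) = #|S| ^ 2.
  rewrite -big_split /=.
  under eq_bigr do rewrite -big_split /=.
  have -> : \sum_(i in S) \sum_(i0 in S) ((g i != g i0) + (g i == g i0)) = \sum_(i in S) \sum_(i0 in S) 1.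
    by apply: eq_bigr => x _; apply: eq_bigr => y _; case: (g x == g y).
  by rewrite !sum_nat_const muln1 expnS expn1.
have E2 : \sum_(x in S) \sum_(y in S) (g x == g y : nat) = \sum_(c in C) r c ^ 2.
  have -> : \sum_(x in S) \sum_(y in S) (g x == g y : nat) = \sum_(x in S) r (g x).
    apply: eq_bigr => x _; rewrite /r big_mkcondr /=; apply: eq_bigr => y _.
    by rewrite eq_sym; case: (g y == g x).
  rewrite (partition_big g (mem C)) //=; apply: eq_bigr => c _.
  rewrite (eq_bigr (fun _ => r c)); last by move=> x /andP[_ /eqP ->].
  by rewrite sum_nat_const /r sum1_card expnS expn1.
have E3 : #|S| = \sum_(c in C) r c.
  by rewrite -sum1_card (partition_big g (mem C)).
have CS := cauchy C r.
rewrite -E3 -E2 in CS.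
move: E1 CS.
set Dd := \sum_(x in S) \sum_(y in S) (g x != g y).
set Q := \sum_(x in S) \sum_(y in S) (g x == g y : nat).
set s2 := #|S| ^ 2.
set k := #|C|.
case: k => [|k] /=; first by rewrite muln0.
nia.
Qed.

Theorem mainTheorem1 (m n D : nat) (Hp : 2 <= 2 * m + n)
  (V : finType) (adj : V -> V -> option (adjtype m n))
  (Hadj : is_mixed_graph adj) (Hdeg : max_deg_le adj D)
  (R : {set V}) (HR : relative_clique adj R) :
  #|R| <= ((2 * m + n).-1 * D ^ 2) %/ (2 * m + n) + D + 1.
Proof.
set p := 2 * m + n.
have Hadj' := Hadj; case: Hadj' => H1 H2.
pose diff w x y := [&& isSome (adj w x), isSome (adj w y) & adj w x != adj w y].
have stepA : forall x y, x \in R -> y \in R ->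
   1 <= (x == y) + isSome (adj x y) + \sum_w (diff w x y : nat).
  move=> x y xR yR; case: (eqVneq x y) => [//|xy].
  case/orP: (key Hadj HR xR yR xy) => [->//|/existsP [w Hw]].
  by rewrite (bigD1 w) //= /diff Hw addnA addn1.
pose B := \sum_w \sum_(x in R) \sum_(y in R) (diff w x y : nat).
have stepB : #|R| * #|R| <= #|R| + #|R| * D + B.
  have -> : #|R| * #|R| = \sum_(x in R) \sum_(y in R) 1.
    by rewrite !sum_nat_const muln1.
  apply: (@leq_trans (\sum_(x in R) \sum_(y in R)
       ((x == y) + isSome (adj x y) + \sum_w (diff w x y : nat)))).
    by apply: leq_sum => x xR; apply: leq_sum => y yR; apply: stepA.
  under eq_bigr do rewrite big_split /= big_split /=.
  rewrite big_split /= big_split /=.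
  have -> : \sum_(i in R) \sum_(i0 in R) \sum_w (diff w i i0 : nat) = B.
    rewrite /B [RHS]exchange_big /=; apply: eq_bigr => x _; exact: exchange_big.
  rewrite leq_add2r; apply: leq_add.
    rewrite -[X in _ <= X]sum1_card leq_sum // => x xR.
    rewrite (bigD1 x) //= eqxx big1 // => y /andP[_ yx].
    by rewrite eq_sym (negbTE yx).
  rewrite -sum_nat_const leq_sum // => x xR.
  by apply: leq_trans (sum_sub_le _ _) _; rewrite sumb_card; apply: Hdeg.
have stepW : forall w, (\sum_(x in R) \sum_(y in R) (diff w x y : nat)) * p <=
     p.-1 * D * \sum_(x in R) (isSome (adj w x) : nat).
  move=> w.
  pose S := [set x in R | isSome (adj w x)].
  have E : \sum_(x in R) \sum_(y in R) (diff w x y : nat) =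
           \sum_(x in S) \sum_(y in S) (adj w x != adj w y).
    rewrite (sum_restrict _ (P := fun x => isSome (adj w x))); last first.
      by move=> x Hx; apply: big1 => y _; rewrite /diff (negbTE Hx).
    apply: eq_bigr => x; rewrite inE => /andP[_ Hx].
    rewrite (sum_restrict _ (P := fun x => isSome (adj w x))); last first.
      by move=> y Hy; rewrite /diff (negbTE Hy) andbF.
    apply: eq_bigr => y; rewrite inE => /andP[_ Hy].
    by rewrite /diff Hx Hy.
  have Es : \sum_(x in R) (isSome (adj w x) : nat) = #|S|.
    rewrite (sum_restrict _ (P := fun x => isSome (adj w x))); last first.
      by move=> x /negbTE ->.
    rewrite -sum1_card; apply: eq_bigr => x; rewrite inE => /andP[_ ->].
    by [].  
  have HC : forall x, x \in S -> adj w x \in [set Some t | t in [set: adjtype m n]].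
    move=> x; rewrite inE => /andP[_]; case: (adj w x) => [t|] //= _.
    by apply: imset_f; rewrite inE.
  have Cc : #|[set Some t | t in [set: adjtype m n]]| = p.
    by rewrite card_imset ?cardsT ?card_adjtype //; move=> a b [].
  have SD : #|S| <= D.
    apply: leq_trans (Hdeg w); apply: subset_leq_card; apply/subsetP => x.
    by rewrite !inE => /andP[].
  have := core HC; rewrite Cc -E Es => H.
  apply: (leq_trans H); rewrite -mulnA leq_mul2l expnS expn1 leq_mul2r SD !orbT.
  done.
have stepC : B * p <= p.-1 * D * (#|R| * D).
  rewrite /B big_distrl /=.
  apply: (@leq_trans (\sum_w p.-1 * D * \sum_(x in R) (isSome (adj w x) : nat))).
    by apply: leq_sum => w _; exact: stepW.
  rewrite -big_distrr /= leq_mul2l; apply/orP; right.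
  rewrite exchange_big /= -sum_nat_const leq_sum // => x _.
  have -> : \sum_w (isSome (adj w x) : nat) = \sum_w (isSome (adj x w) : nat).
    by apply: eq_bigr => w _; rewrite (H2 x w); case: (adj x w).
  by rewrite sumb_card; apply: Hdeg.
move: stepB stepC; rewrite -/p; set r := #|R|.
case E: p (Hp : 2 <= p) => [|q] // Hq sB; rewrite /= => sC.
case: (posnP r) => [-> //|rpos].
have H : r * (r * q.+1) <= r * (q.+1 + D * q.+1 + q * D ^ 2).
  have : r * r * q.+1 <= (r + r * D + B) * q.+1 by rewrite leq_mul2r sB orbT.
  rewrite expnS expn1 in sC *; nia.
rewrite leq_pmul2l // in H.
have H2' : r - D - 1 <= (q * D ^ 2) %/ q.+1 by rewrite leq_divRL //; nia.
lia.
Qed.
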